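(* Let $\mathcal{M}$ be an MRTA instance with robot-task graph $G=(R,T;E;c)$ such that $c$ is metric and injective on $E$. Then (1) $\textsc{Assign}(\mathcal{M})$ provides a 2-approximation for $\textsc{MinSum}(\mathcal{M})$, i.e. $C(\textsc{Assign}(\mathcal{M}))\le2\,C(\textsc{MinSum}(\mathcal{M}))$; and (2) $\textsc{Assign}(\mathcal{M})$ is robust over the interval family $\{(-\underline{\Delta}(e),\overline{\Delta}(e)]:e\in E\}$ output by $\textsc{AuctionSensitivity}(\mathcal{M},W,a)$, where $(W,a)=\textsc{Auction}(\mathcal{M})$: that is, for every edge cost function $c'$ on $E$ with $c'(e)\in(c(e)-\underline{\Delta}(e),c(e)+\overline{\Delta}(e)]$ for all $e\in E$, $\textsc{Auction}$ run with costs $c'$ produces the same list of winning edges $W$, and hence $\textsc{Assign}$ outputs the same plan.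
   Context: $R$ (robots) and $T$ (tasks) are finite disjoint sets with $R\neq\emptyset$, $|R\sqcup T|\ge3$. A metric cost $c$ on $R\sqcup T$ satisfies $c(x,y)\ge0$, $c(x,y)=0$ iff $x=y$, symmetry and the triangle inequality. The robot-task graph has vertex set $R\sqcup T$, edge set $E$ of all 2-element subsets, with edge costs $c(\{x,y\})=c(x,y)$; injective means distinct edges have distinct costs. The cost of a list $P=(v_0,\dots,v_n)$ is $C(P)=\sum_{i=0}^{n-1}c(v_i,v_{i+1})$. A robot-route is such a list with $v_0\in R$ and $v_j\in T$ for $j\ge1$; a plan is a family of $|R|$ robot-routes whose vertex sets partition $R\sqcup T$, with cost the sum of route costs; $\textsc{MinSum}(\mathcal{M})$ is a minimum-cost plan. $\textsc{Auction}$: set $A=\emptyset$, $a(r)=0$ for $r\in R$. For $k=1,\dots,|T|$: let $w_k=\{s,t\}$ be the edge with $s\in R\cup A$, $t\in T\setminus A$ minimising its cost; set $a(t)=k$, $A\leftarrow A\cup\{t\}$. Output $W=(w_1,\dots,w_{|T|})$ and $a$. $\textsc{DFShortcut}$: the edges of $W$ form a forest each of whose components contains exactly one robot. For each robot $r$ with component vertex set $V(r)$, start with $P(r)=(r)$ and, while $P(r)$ does not contain all of $V(r)$, scan $P(r)$ from last to first, and at the first vertex $t$ having a $W$-neighbour not in $P(r)$, append the such neighbour $s$ with smallest $a(s)$. Output $\{P(r):r\in R\}$. $\textsc{Assign}(\mathcal{M})=\textsc{DFShortcut}(\textsc{Auction}(\mathcal{M}))$. For $e=\{x,y\}$, $B_e=\{k\in\mathbb{Z}:\min(a(x),a(y))<k\le\max(a(x),a(y))\}$.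 $\textsc{AuctionSensitivity}(\mathcal{M},W,a)$ outputs $\textsc{ErrorIntervals}(G,W,a,I_0)$ where $I_0=\textsc{Initialiser}(G,W,a)$, defined as follows. $\textsc{Initialiser}$: set $L(e)=0$ for all $e$; process rounds $k$ in order of decreasing $c(w_k)$; for round $k$ let $E_k$ be the set of edges not appearing in $W$ with $k\in B_e$, set $M(e)=\max(L(e),\tfrac12(c(w_k)+c(e)))$ for $e\in E_k$, set $I_0(w_k)=\min_{e\in E_k}M(e)-c(w_k)$, then update $L(e)\leftarrow\max(L(e),c(w_k)+I_0(w_k))$ for $e\in E_k$. $\textsc{ErrorIntervals}$: $\overline{\Delta}(w_k)=I_0(w_k)$; if $e=w_K$ and $B_e\setminus\{K\}\ne\emptyset$, $\underline{\Delta}(e)=c(e)-\max_{k\in B_e\setminus\{K\}}(c(w_k)+\overline{\Delta}(w_k))$; if $e=w_K$ and $B_e\setminus\{K\}=\emptyset$, $\underline{\Delta}(e)=c(e)$; if $e$ is not in $W$, $\overline{\Delta}(e)=\infty$ and $\underline{\Delta}(e)=c(e)-\max_{k\in B_e}(c(w_k)+\overline{\Delta}(w_k))$. *)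

(* Defs.v *)
From HB Require Import structures.
From mathcomp Require Import all_boot all_order all_algebra.
From mathcomp Require Import reals constructive_ereal.
Set Implicit Arguments. Unset Strict Implicit. Unset Printing Implicit Defensive.
Import Order.TTheory GRing.Theory Num.Theory.
Local Open Scope ring_scope.

Section MRTA.
Variables (R : realType) (V : finType).
(* V = R ⊔ T ; [robot v] says v ∈ R, otherwise v ∈ T (a task). *)
Variable robot : pred V.

Definition task (v : V) : bool := ~~ robot v.

Definition metric (c : V -> V -> R) : Prop :=
  [/\ forall x y, 0 <= c x y,
      forall x y, c x y = 0 <-> x = y,
      forall x y, c x y = c y x
    & forall x y z, c x z <= c x y + c y z].

Definition injective_on_edges (c : V -> V -> R) : Prop :=
  forall x y u v, x != y -> u != v -> c x y = c u v ->
    (x = u /\ y = v) \/ (x = v /\ y = u).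

Fixpoint path_cost_from (c : V -> V -> R) (x : V) (s : seq V) : R :=
  match s with
  | [::] => 0
  | y :: s' => c x y + path_cost_from c y s'
  end.
Definition list_cost (c : V -> V -> R) (s : seq V) : R :=
  match s with [::] => 0 | x :: s' => path_cost_from c x s' end.

(* ---------- plans ----------
   A plan is given as the family (route r)_{r ∈ R}; route r is the robot-route
   of robot r (values of [route] at tasks are irrelevant). *)
Definition robot_route (r : V) (s : seq V) : Prop :=
  exists s', s = r :: s' /\ all task s'.

Definition is_plan (route : V -> seq V) : Prop :=
  (forall r, robot r -> robot_route r (route r)) /\
  (forall v, #|[pred r | robot r && (v \in route r)]| = 1%N).

Definition plan_cost (c : V -> V -> R) (route : V -> seq V) : R :=
  \sum_(r | robot r) list_cost c (route r).

Definition is_minsum (c : V -> V -> R) (P : V -> seq V) : Prop :=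
  is_plan P /\ forall Q, is_plan Q -> plan_cost c P <= plan_cost c Q.

(* ---------- Auction ----------
   W is the list of winning edges w_k = {s_k, t_k} (stored as the pair
   (s_k, t_k), s_k ∈ R ∪ A, t_k ∈ T \ A).  [auction_run c W] says that W is
   a possible output of Auction run with edge costs c (any tie-breaking). *)
Definition auction_run (c : V -> V -> R) (W : seq (V * V)) : Prop :=
  size W = #|[pred v | task v]| /\
  forall W1 s t W2, W = W1 ++ (s, t) :: W2 ->
    let A := [seq p.2 | p <- W1] in
    [/\ robot s || (s \in A), task t, t \notin A
      & forall s' t', robot s' || (s' \in A) -> task t' -> t' \notin A ->
          c s t <= c s' t'].

Definition alab (W : seq (V * V)) (v : V) : nat :=
  if robot v then 0%N else (index v [seq p.2 | p <- W]).+1.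

Definition wadj (W : seq (V * V)) (u s : V) : bool :=
  ((u, s) \in W) || ((s, u) \in W).

Definition dfs_step (W : seq (V * V)) (P : seq V) : seq V :=
  let out u := [seq s <- enum V | wadj W u s && (s \notin P)] in
  match [seq u <- rev P | out u != [::]] with
  | [::] => P
  | u :: _ =>
      match sort (fun x y => alab W x <= alab W y)%N (out u) with
      | s :: _ => rcons P s
      | [::] => P
      end
  end.

(* P(r): iterate the loop body; it is the identity once P(r) ⊇ V(r),
   and #|V| iterations suffice. *)
Definition dfshortcut (W : seq (V * V)) : V -> seq V :=
  fun r => iter #|V| (dfs_step W) [:: r].

Definition assign_plan (W : seq (V * V)) : V -> seq V := dfshortcut W.

Local Open Scope ereal_scope.

(* cost of w_k (rounds are numbered 1..|T|) *)
Definition wcost (c : V -> V -> R) (W : seq (V * V)) (k : nat) : R :=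
  nth 0%R [seq c p.1 p.2 | p <- W] k.-1.

Definition inW (W : seq (V * V)) (x y : V) : bool :=
  ((x, y) \in W) || ((y, x) \in W).

Definition inB (W : seq (V * V)) (x y : V) (k : nat) : bool :=
  (minn (alab W x) (alab W y) < k <= maxn (alab W x) (alab W y))%N.

Definition inE (W : seq (V * V)) (k : nat) (x y : V) : bool :=
  [&& x != y, ~~ inW W x y & inB W x y k].

(* one round of Initialiser; state = (L, I_0) *)
Definition init_step (c : V -> V -> R) (W : seq (V * V))
    (st : (V -> V -> \bar R) * (nat -> \bar R)) (k : nat)
    : (V -> V -> \bar R) * (nat -> \bar R) :=
  let L := st.1 in let I := st.2 in
  let ck := wcost c W k in
  let i := (\big[mine/+oo]_(p : V * V | inE W k p.1 p.2)
               maxe (L p.1 p.2) (((ck + c p.1 p.2) / 2%:R)%R)%:E) - ck%:E in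
  (fun x y => if inE W k x y then maxe (L x y) (ck%:E + i) else L x y,
   fun j => if j == k then i else I j).

Definition initialiser (c : V -> V -> R) (W : seq (V * V)) : nat -> \bar R :=
  (foldl (init_step c W) (fun _ _ => 0, fun _ => 0)
     (sort (fun i j => wcost c W j <= wcost c W i)%R (iota 1 (size W)))).2.

Definition roundof (W : seq (V * V)) (x y : V) : nat :=
  if (x, y) \in W then (index (x, y) W).+1 else (index (y, x) W).+1.

Definition dup (c : V -> V -> R) (W : seq (V * V)) (x y : V) : \bar R :=
  if inW W x y then initialiser c W (roundof W x y) else +oo.

Definition thr (c : V -> V -> R) (W : seq (V * V)) (S : pred nat) : \bar R :=
  \big[maxe/-oo]_(k <- iota 1 (size W) | S k)
     ((wcost c W k)%:E + initialiser c W k).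

Definition dlow (c : V -> V -> R) (W : seq (V * V)) (x y : V) : \bar R :=
  if inW W x y then
    let K := roundof W x y in
    let S := [pred k | inB W x y k && (k != K)] in
    if ~~ has S (iota 1 (size W)) then (c x y)%:E
    else (c x y)%:E - thr c W S
  else (c x y)%:E - thr c W (inB W x y).

End MRTA.

(* Main.v *)
Require Import Defs.
From HB Require Import structures.
From mathcomp Require Import all_boot all_order all_algebra.
From mathcomp Require Import reals constructive_ereal.
From mathcomp Require Import lra zify.
Import Order.TTheory GRing.Theory Num.Theory.
Local Open Scope ring_scope.
Set Implicit Arguments. Unset Strict Implicit.

Lemma split_uniq (T : eqType) (s : seq T) :
  (forall s1 x s2, s = s1 ++ x :: s2 -> x \notin s1) -> uniq s.
Proof.
elim/last_ind: s => [//|s x IH] H.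
rewrite rcons_uniq; apply/andP; split.
  by apply: (H s x [::]); rewrite cats1.
apply: IH => s1 y s2 E; apply: (H s1 y (rcons s2 x)).
by rewrite E rcons_cat.
Qed.

Lemma ar_uniq (R : realType) (V : finType) (robot : pred V) (c : V -> V -> R) W :
  auction_run robot c W -> uniq (map snd W).
Proof.
case=> _ H; apply: split_uniq => s1 x s2 E.
have [W1 [p [W2 [EW E1 Ep]]]] : exists W1 p W2,
   [/\ W = W1 ++ p :: W2, map snd W1 = s1 & p.2 = x].
  elim: W s1 E {H} => [|q W IH] [|y s1] //=.
    by case=> <- _; exists [::], q, W.
  case=> E0 /IH [W1 [p [W2 [-> E1 E2]]]].
  by exists (q :: W1), p, W2; rewrite /= E1 E0.
case: p EW Ep => s t EW /= <-; rewrite -E1.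
by case: (H _ _ _ _ EW).
Qed.


Definition par (V : finType) (robot : pred V) (W : seq (V * V)) (x : V) : V :=
  if robot x then x else nth x (map fst W) (index x (map snd W)).

Lemma ar_splitP (R : realType) (V : finType) (robot : pred V) (c : V -> V -> R) W p :
  auction_run robot c W -> p \in W -> exists W1 W2, W = W1 ++ p :: W2 /\
   [/\ robot p.1 || (p.1 \in map snd W1), task robot p.2, p.2 \notin map snd W1
      & forall s' t', robot s' || (s' \in map snd W1) -> task robot t' ->
          t' \notin map snd W1 -> c p.1 p.2 <= c s' t'].
Proof.
case=> _ H pW.
have [W1 [W2 EW]] : exists W1 W2, W = W1 ++ p :: W2.
  by case/splitPr: pW => W1 W2; exists W1, W2.
exists W1, W2; split => //.
by case: p EW {pW} => s t EW; case: (H W1 s t W2 EW).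
Qed.

Lemma ar_snd_task (R : realType) (V : finType) (robot : pred V) (c : V -> V -> R) W x :
  auction_run robot c W -> x \in map snd W -> task robot x.
Proof.
move=> hW /mapP [p pW ->].
by have [W1 [W2 [_ [_ ? _ _]]]] := ar_splitP hW pW.
Qed.

Lemma ar_task_snd (R : realType) (V : finType) (robot : pred V) (c : V -> V -> R) W x :
  auction_run robot c W -> task robot x -> x \in map snd W.
Proof.
move=> hW tx.
have U := ar_uniq hW.
have E : #|[pred y in map snd W]| = #|[pred v | task robot v]|.
  by rewrite (card_uniqP U) size_map; case: hW.
have S : [pred y in map snd W] \subset [pred v | task robot v].
  by apply/subsetP => y /= /(ar_snd_task hW).
by have := subset_cardP E S => /(_ x); rewrite !inE /= tx.
Qed.

Lemma ar_par (R : realType) (V : finType) (robot : pred V) (c : V -> V -> R) W p :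
  auction_run robot c W -> p \in W -> par robot W p.2 = p.1.
Proof.
move=> hW pW; have [W1 [W2 [EW [_ tp np _]]]] := ar_splitP hW pW.
rewrite /par; move: tp; rewrite /task => /negbTE ->.
rewrite EW !map_cat index_cat (negbTE np) /= eqxx addn0 nth_cat size_map.
by rewrite size_map ltnn subnn.
Qed.

Lemma ar_lab (R : realType) (V : finType) (robot : pred V) (c : V -> V -> R) W p :
  auction_run robot c W -> p \in W -> (alab robot W p.1 < alab robot W p.2)%N.
Proof.
move=> hW pW; have [W1 [W2 [EW [sp tp np _]]]] := ar_splitP hW pW.
rewrite /alab; move: (tp); rewrite /task => /negbTE ->.
rewrite EW !map_cat.
case: ifP => rs; first by [].
move: sp; rewrite rs /= => sp.
by rewrite !index_cat sp (negbTE np) /= eqxx addn0 ltnS index_mem.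
Qed.

Lemma ar_alab_le (R : realType) (V : finType) (robot : pred V) (c : V -> V -> R) W x :
  auction_run robot c W -> (alab robot W x <= size W)%N.
Proof.
move=> hW; rewrite /alab; case: ifP => // rx.
have : x \in map snd W by apply: (ar_task_snd hW); rewrite /task rx.
by rewrite -index_mem size_map.
Qed.

Lemma ar_size (R : realType) (V : finType) (robot : pred V) (c : V -> V -> R) W :
  auction_run robot c W -> (size W <= #|V|)%N.
Proof. by case=> -> _; apply: max_card. Qed.

Lemma par_robot (V : finType) (robot : pred V) W x : robot x -> par robot W x = x.
Proof. by rewrite /par => ->. Qed.

Lemma ar_task_in (R : realType) (V : finType) (robot : pred V) (c : V -> V -> R) W t :
  auction_run robot c W -> task robot t -> (par robot W t, t) \in W.
Proof.
move=> hW /(ar_task_snd hW) /mapP [p pW ->].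
by rewrite (ar_par hW pW) -surjective_pairing.
Qed.

Lemma ar_lab_par (R : realType) (V : finType) (robot : pred V) (c : V -> V -> R) W t :
  auction_run robot c W -> task robot t ->
  (alab robot W (par robot W t) < alab robot W t)%N.
Proof. by move=> hW /(ar_task_in hW) /(ar_lab hW). Qed.

Lemma ereal_subK (R : realType) (x : R) (y : \bar R) : (x%:E - (x%:E - y))%E = y.
Proof.
case: y => [y| |] //=; rewrite -!EFinD; congr EFin; lra.
Qed.

Lemma le_thr (R : realType) (V : finType) (robot : pred V) (c : V -> V -> R) W
   (S : pred nat) k :
  (k \in iota 1 (size W)) -> S k ->
  ((wcost c W k)%:E + initialiser robot c W k <= thr robot c W S)%E.
Proof.
rewrite /thr; elim: (iota 1 (size W)) => [//|j s IH].
rewrite inE big_cons => /orP [/eqP <- -> | ks Sk].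
  by rewrite le_max lexx.
case: ifP => _; last exact: IH.
by rewrite le_max IH ?orbT.
Qed.

Lemma ar_split_facts (R : realType) (V : finType) (robot : pred V) (c : V -> V -> R) W W1 s t W2 :
  auction_run robot c W -> W = W1 ++ (s, t) :: W2 ->
  [/\ robot s || (s \in map snd W1), task robot t, t \notin map snd W1
      & forall s' t', robot s' || (s' \in map snd W1) -> task robot t' ->
          t' \notin map snd W1 -> c s t <= c s' t'].
Proof. by case=> _ H EW; case: (H _ _ _ _ EW). Qed.

Lemma crossing_inB (R : realType) (V : finType) (robot : pred V) (c : V -> V -> R) W W1 s t W2 s' t' :
  auction_run robot c W -> W = W1 ++ (s, t) :: W2 ->
  robot s' || (s' \in map snd W1) -> task robot t' -> t' \notin map snd W1 ->
  inB robot W s' t' (size W1).+1.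
Proof.
move=> hW EW hs ht hn.
have h1 : (alab robot W s' <= size W1)%N.
  rewrite /alab; case: ifP => // rs; move: hs; rewrite rs /= => hs.
  by rewrite EW map_cat index_cat hs -(size_map snd) index_mem.
have h2 : (size W1 < alab robot W t')%N.
  rewrite /alab; move: (ht); rewrite /task => /negbTE ->.
  by rewrite EW map_cat index_cat (negbTE hn) size_map; lia.
rewrite /inB; lia.
Qed.

Lemma index_split (T : eqType) (W1 W2 : seq (T * T)) (s t : T) :
  t \notin map snd W1 -> index (s, t) (W1 ++ (s, t) :: W2) = size W1.
Proof.
move=> hn; rewrite index_cat.
have -> : ((s, t) \in W1) = false.
  by apply/negbTE; apply: contra hn => h; apply/mapP; exists (s, t).
by rewrite /= eqxx addn0.
Qed.

Lemma robust_step (R : realType) (V : finType) (robot : pred V) (c c' : V -> V -> R) W W1 s t W2 s' t' :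
  auction_run robot c W ->
  (forall x y, x != y ->
        ((c x y)%:E - dlow robot c W x y < (c' x y)%:E)%E /\
        ((c' x y)%:E <= (c x y)%:E + dup robot c W x y)%E) ->
  W = W1 ++ (s, t) :: W2 ->
  robot s' || (s' \in map snd W1) -> task robot t' -> t' \notin map snd W1 ->
  (s', t') != (s, t) -> c' s t < c' s' t'.
Proof.
move=> hW hc EW hs ht hn hne.
have [hs0 ht0 hn0 _] := ar_split_facts hW EW.
set k := (size W1).+1.
have kin : k \in iota 1 (size W).
  by rewrite mem_iota EW size_cat /= /k; lia.
have neq : forall a b, robot a || (a \in map snd W1) -> task robot b ->
     b \notin map snd W1 -> a != b.
  move=> a b ha hb hnb; apply/eqP => E; move: ha; rewrite E.
  by move: hb; rewrite /task => /negbTE -> /=; apply/negP.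
have stW : (s, t) \in W by rewrite EW mem_cat inE eqxx orbT.
have Eidx : index (s, t) W = size W1 by rewrite EW index_split.
have wk : wcost c W k = c s t.
  rewrite /wcost /k /= -Eidx (nth_map (s, t)) ?index_mem // nth_index //.
have hup : ((c' s t)%:E <= (wcost c W k)%:E + initialiser robot c W k)%E.
  have [_ h] := hc s t (neq _ _ hs0 ht0 hn0).
  move: h; rewrite /dup /inW stW /= /roundof stW Eidx -/k wk //.
have hk : inB robot W s' t' k by apply: (crossing_inB hW EW).
have [hl _] := hc s' t' (neq _ _ hs ht hn).
suff : ((wcost c W k)%:E + initialiser robot c W k <=
        (c s' t')%:E - dlow robot c W s' t')%E.
  move=> h2; have := le_lt_trans (le_trans hup h2) hl; by rewrite lte_fin.
rewrite /dlow; case: ifP => hinW; last first.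
  by rewrite ereal_subK; apply: le_thr.
set K := roundof W s' t'.
have KK : K != k.
  rewrite /K /roundof; apply/negP => /eqP E.
  have [q qW qE] : exists2 q, q \in W & ((q == (s', t')) || (q == (t', s'))) && (K == (index q W).+1).
    move: hinW; rewrite /inW /K /roundof; case: ifP => h1 /=.
      by move=> _; exists (s', t'); rewrite ?eqxx.
    by move=> h2; exists (t', s'); rewrite ?eqxx ?orbT.
  move: qE => /andP [qq /eqP EK]; move: EK; rewrite /K /roundof E => /eqP.
  rewrite eqSS -Eidx => /eqP EI.
  have : nth (s, t) W (index q W) = nth (s, t) W (index (s, t) W) by rewrite EI.
  rewrite !nth_index // => Eq; subst q.
  case/orP: qq => /eqP [E1 E2].
    by move: hne; rewrite E1 E2 eqxx.
  subst; move: hs; rewrite (negbTE hn0) orbF; move: ht0; rewrite /task => /negbTE ->.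
  by [].
have hasS : has [pred j | inB robot W s' t' j && (j != K)] (iota 1 (size W)).
  by apply/hasP; exists k => //=; rewrite hk eq_sym KK.
rewrite hasS /= ereal_subK; apply: le_thr => //=.
by rewrite hk eq_sym KK.
Qed.

Lemma robust_eq (R : realType) (V : finType) (robot : pred V) (c c' : V -> V -> R) W W' :
  auction_run robot c W ->
  (forall x y, x != y ->
        ((c x y)%:E - dlow robot c W x y < (c' x y)%:E)%E /\
        ((c' x y)%:E <= (c x y)%:E + dup robot c W x y)%E) ->
  auction_run robot c' W' -> W' = W.
Proof.
move=> hW hc hW'.
have Esz : size W' = size W by case: hW => -> _; case: hW' => -> _.
suff H : forall n, take n W' = take n W.
  by rewrite -(take_size W') H Esz take_size.
elim=> [|n IH]; first by rewrite !take0.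
case: (ltnP n (size W)) => hn; last first.
  have hn' : (size W' <= n)%N by rewrite Esz.
  move: IH; rewrite (take_oversize (leqW hn)) (take_oversize (leqW hn')).
  by rewrite (take_oversize hn) (take_oversize hn').
have [p0 _] : {p0 : V * V | true}.
  by move: hn; case: (W) => [|p0 ?] // _; exists p0.
case Ew: (nth p0 W n) => [s t].
have x0 := (s, t).
have EW : W = take n W ++ (s, t) :: drop n.+1 W.
  by rewrite -Ew -drop_nth // cat_take_drop.
case Ew': (nth x0 W' n) => [s'' t''].
have EW' : W' = take n W ++ (s'', t'') :: drop n.+1 W'.
  by rewrite -IH -Ew' -drop_nth ?Esz // cat_take_drop.
have [hs ht hn' hmin] := ar_split_facts hW EW.
have [hs' ht' hn'' hmin'] := ar_split_facts hW' EW'.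
have le1 := hmin' _ _ hs ht hn'.
have eqp : (s'', t'') = (s, t).
  apply/eqP; apply/negPn/negP => hne.
  have := robust_step hW hc EW hs' ht' hn'' hne.
  by rewrite ltNge le1.
rewrite (take_nth x0) ?Esz // (take_nth x0) // IH Ew' eqp.
by rewrite (set_nth_default x0 _ hn) in Ew; rewrite Ew.
Qed.

Definition rootv (V : finType) (robot : pred V) W (x : V) := iter #|V| (par robot W) x.
Definition Dc (R : realType) (V : finType) (robot : pred V) (c : V -> V -> R) W (x : V) : R :=
  \sum_(i < #|V|) c (iter i.+1 (par robot W) x) (iter i (par robot W) x).
Definition anc (V : finType) (robot : pred V) W (u v : V) := exists n, iter n (par robot W) v = u.

Lemma met0 (R : realType) (V : finType) (c : V -> V -> R) x : metric c -> c x x = 0.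
Proof. by case=> _ h _ _; apply/h. Qed.
Lemma met_ge0 (R : realType) (V : finType) (c : V -> V -> R) x y : metric c -> 0 <= c x y.
Proof. by case. Qed.
Lemma met_sym (R : realType) (V : finType) (c : V -> V -> R) x y : metric c -> c x y = c y x.
Proof. by case. Qed.
Lemma met_tri (R : realType) (V : finType) (c : V -> V -> R) x y z : metric c -> c x z <= c x y + c y z.
Proof. by case. Qed.

Lemma iter_robot (R : realType) (V : finType) (robot : pred V) (c : V -> V -> R) W :
  auction_run robot c W -> forall n x, (alab robot W x <= n)%N -> robot (iter n (par robot W) x).
Proof.
move=> hW; elim=> [|n IH] x.
  by rewrite leqn0 /alab; case: ifP.
move=> hx; rewrite iterSr; case rx: (robot x).
  by rewrite par_robot //; apply: IH; rewrite /alab rx.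
apply: IH; have := ar_lab_par (t := x) hW; rewrite /task rx => /(_ erefl).
by lia.
Qed.

Lemma root_robot (R : realType) (V : finType) (robot : pred V) (c : V -> V -> R) W x :
  auction_run robot c W -> robot (rootv robot W x).
Proof.
move=> hW; apply: (iter_robot hW); apply: leq_trans (ar_alab_le x hW) (ar_size hW).
Qed.

Lemma iter_fix_robot (V : finType) (robot : pred V) W n r :
  robot r -> iter n (par robot W) r = r.
Proof. by move=> rr; elim: n => //= n ->; rewrite par_robot. Qed.

Lemma root_par (R : realType) (V : finType) (robot : pred V) (c : V -> V -> R) W x :
  auction_run robot c W -> rootv robot W (par robot W x) = rootv robot W x.
Proof.
move=> hW; rewrite /rootv -iterSr iterS par_robot //; exact: (root_robot x hW).
Qed.

Lemma root_of_robot (V : finType) (robot : pred V) W r : robot r -> rootv robot W r = r.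
Proof. exact: iter_fix_robot. Qed.

Lemma D_robot (R : realType) (V : finType) (robot : pred V) (c : V -> V -> R) W r :
  metric c -> robot r -> Dc robot c W r = 0.
Proof.
move=> hm rr; rewrite /Dc big1 // => i _.
rewrite !iter_fix_robot //; exact: (met0 r hm).
Qed.

Lemma D_ge0 (R : realType) (V : finType) (robot : pred V) (c : V -> V -> R) W x :
  metric c -> 0 <= Dc robot c W x.
Proof. by move=> hm; apply: sumr_ge0 => i _; apply: met_ge0. Qed.

Lemma D_task (R : realType) (V : finType) (robot : pred V) (c : V -> V -> R) W t :
  auction_run robot c W -> metric c -> task robot t ->
  Dc robot c W t = c (par robot W t) t + Dc robot c W (par robot W t).
Proof.
move=> hW hm tt; rewrite /Dc.
have rt := root_robot t hW; rewrite /rootv in rt.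
have : (0 < #|V|)%N by apply/card_gt0P; exists t.
move: rt; case: #|V| => [//|N] /= rt _.
rewrite big_ord_recl /= big_ord_recr /=.
have -> : c (par robot W (iter N (par robot W) (par robot W t))) (iter N (par robot W) (par robot W t)) = 0.
  by rewrite -iterSr par_robot // ?(met0 _ hm).
rewrite addr0; congr (_ + _); apply: eq_bigr => i _.
by rewrite add0n -!iterSr.
Qed.

Lemma anc_cost (R : realType) (V : finType) (robot : pred V) (c : V -> V -> R) W u v :
  auction_run robot c W -> metric c -> anc robot W u v ->
  c u v <= Dc robot c W v - Dc robot c W u.
Proof.
move=> hW hm [n <-]; elim: n v => [|n IH] v.
  by rewrite /= (met0 _ hm) subrr.
rewrite iterSr; case rv: (robot v).
  by have := IH v; rewrite par_robot.
have tv : task robot v by rewrite /task rv.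
rewrite [Dc _ _ _ v](D_task hW hm tv).
have h1 := met_tri (iter n (par robot W) (par robot W v)) (par robot W v) v hm.
have h2 := IH (par robot W v).
lra.
Qed.

Lemma anc_chain (V : finType) (robot : pred V) W x u v :
  anc robot W x v -> anc robot W u v -> anc robot W x u \/ anc robot W u x.
Proof.
move=> [i Ex] [j Eu]; case: (leqP j i) => hij.
  left; exists (i - j)%N; rewrite -Eu -Ex -iterD subnK //.
right; exists (j - i)%N; rewrite -Eu -Ex -iterD subnK //; exact: ltnW.
Qed.

Lemma anc_refl (V : finType) (robot : pred V) W x : anc robot W x x.
Proof. by exists 0%N. Qed.

Lemma anc_child (V : finType) (robot : pred V) W x u s :
  par robot W s = u -> anc robot W x u -> anc robot W x s.
Proof. by move=> Ep [n En]; exists n.+1; rewrite iterSr Ep. Qed.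

Definition outl (V : finType) (W : seq (V * V)) (P : seq V) (u : V) :=
  [seq s <- enum V | wadj W u s && (s \notin P)].

Lemma filter_cons_split (T : eqType) (p : pred T) (s : seq T) u L :
  [seq x <- s | p x] = u :: L ->
  exists pre post, s = pre ++ u :: post /\ all (predC p) pre.
Proof.
elim: s => [//|y s IH] /=; case: ifP => py.
  by case=> <- _; exists [::], s.
move=> /IH [pre [post [-> hp]]]; exists (y :: pre), post; split => //=.
by rewrite py hp.
Qed.

Lemma dfs_stepP (V : finType) (robot : pred V) W P :
  (dfs_step robot W P = P /\ forall u, u \in P -> outl W P u = [::]) \/
  exists u s pre post, [/\ rev P = pre ++ u :: post,
     all (fun x => outl W P x == [::]) pre, s \in outl W P u
     & dfs_step robot W P = rcons P s].
Proof.
rewrite /dfs_step.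
case E: [seq u <- rev P | [seq s <- enum V | wadj W u s && (s \notin P)] != [::]] => [|u L].
  left; split => // u uP; apply/eqP/negPn/negP => h.
  have : u \in [seq u <- rev P | [seq s <- enum V | wadj W u s && (s \notin P)] != [::]].
    by rewrite mem_filter h mem_rev.
  by rewrite E.
right.
have hu : outl W P u != [::].
  have : u \in u :: L by rewrite inE eqxx.
  by rewrite -E mem_filter => /andP [].
have [pre [post [Er hpre]]] := filter_cons_split E.
case Es: (sort _ _) => [|s L'].
  move: hu; have := size_sort (fun x y => (alab robot W x <= alab robot W y)%N) (outl W P u).
  by rewrite /outl Es /= => /esym /size0nil ->.
exists u, s, pre, post; split => //.
  by apply: sub_all hpre => x /=; rewrite negbK.
by rewrite -(mem_sort (fun x y => (alab robot W x <= alab robot W y)%N)) /outl Es inE eqxx.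
Qed.

Lemma pcf_rcons (R : realType) (V : finType) (c : V -> V -> R) x s y :
  path_cost_from c x (rcons s y) = path_cost_from c x s + c (last x s) y.
Proof. by elim: s x => [|z s IH] x /=; rewrite ?add0r ?addr0 // IH addrA. Qed.

Definition wsum (R : realType) (V : finType) (robot : pred V) (c : V -> V -> R) W (P : seq V) : R :=
  \sum_(x <- P | task robot x) c (par robot W x) x.

Definition dinv (R : realType) (V : finType) (robot : pred V) (c : V -> V -> R) W (r : V) (P : seq V) :=
  [/\ (exists P0, P = r :: P0) /\ uniq P,
      forall x, x \in P -> x != r -> task robot x && (index (par robot W x) P < index x P)%N,
      forall x, x \in P -> rootv robot W x = r,
      forall x, x \in P -> anc robot W x (last r P) \/ (forall y, wadj W x y -> y \in P)
    & list_cost c P + Dc robot c W (last r P) <= 2%:R * wsum robot c W P].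

Lemma index_rcons_in (T : eqType) (P : seq T) x y : x \in P -> index x (rcons P y) = index x P.
Proof. by move=> xP; rewrite -cats1 index_cat xP. Qed.

Lemma inv_par_in (R : realType) (V : finType) (robot : pred V) (c : V -> V -> R) W r P x :
  dinv robot c W r P -> x \in P -> x != r -> par robot W x \in P.
Proof.
case=> _ h3 _ _ _ xP xr; have /andP [_ hi] := h3 x xP xr.
by rewrite -index_mem (ltn_trans hi) // index_mem.
Qed.

Lemma inv_index_anc (R : realType) (V : finType) (robot : pred V) (c : V -> V -> R) W r P :
  robot r -> dinv robot c W r P -> forall n x, x \in P ->
  iter n (par robot W) x != x -> (index (iter n (par robot W) x) P < index x P)%N.
Proof.
move=> rr hI; elim=> [|n IH] x xP; first by rewrite /= eqxx.
have [xr | xr] := eqVneq x r.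
  by rewrite xr iter_fix_robot ?eqxx.
have hI' := hI; case: hI' => _ h3 _ _ _.
have /andP [_ hi] := h3 x xP xr.
have pP := inv_par_in hI xP xr.
rewrite iterSr => hne.
have [E | ne] := eqVneq (iter n (par robot W) (par robot W x)) (par robot W x).
  by rewrite E.
exact: ltn_trans (IH _ pP ne) hi.
Qed.

Lemma wadj_cases (R : realType) (V : finType) (robot : pred V) (c : V -> V -> R) W u s :
  auction_run robot c W -> wadj W u s ->
  (task robot s /\ par robot W s = u) \/ (task robot u /\ par robot W u = s).
Proof.
move=> hW /orP [h|h].
  left; split; first by apply: (ar_snd_task hW); apply/mapP; exists (u, s).
  exact: (ar_par hW h).
right; split; first by apply: (ar_snd_task hW); apply/mapP; exists (s, u).
exact: (ar_par hW h).
Qed.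

Lemma dinv_step (R : realType) (V : finType) (robot : pred V) (c : V -> V -> R) W r P :
  auction_run robot c W -> metric c -> robot r ->
  dinv robot c W r P -> dinv robot c W r (dfs_step robot W P).
Proof.
move=> hW hm rr hI.
case: (dfs_stepP robot W P) => [[-> _] // | [u [s [pre [post [Er hpre hs ->]]]]]].
have hI0 := hI; case: hI0 => [[[P0 EP] U] h3 h4 h5 h6].
move: hs; rewrite mem_filter mem_enum andbT => /andP [hadj snP].
have uP : u \in P by rewrite -mem_rev Er mem_cat inE eqxx orbT.
have EP2 : P = rcons (rev post) u ++ rev pre.
  by rewrite -(revK P) Er rev_cat rev_cons.
have Eiu : index u P = size post.
  have : uniq (rcons (rev post) u ++ rev pre) by rewrite -EP2.
  rewrite cat_uniq rcons_uniq => /andP [/andP [hn _] _].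
  by rewrite EP2 index_cat mem_rcons inE eqxx /= -cats1 index_cat (negbTE hn) /= eqxx addn0 size_rev.
have after : forall x, x \in P -> (index u P < index x P)%N -> outl W P x = [::].
  move=> x xP; rewrite Eiu.
  have -> : index x P = index x (rcons (rev post) u ++ rev pre) by rewrite -EP2.
  rewrite index_cat.
  case: ifP => hx.
    move: hx; rewrite -index_mem size_rcons size_rev => hx hlt.
    by exfalso; move: hlt; rewrite ltnNge -ltnS hx.
  move=> _; have : x \in rev pre by move: xP; rewrite EP2 mem_cat hx.
  rewrite mem_rev => xpre; by have /eqP := allP hpre x xpre.
have ancu : anc robot W u (last r P).
  case: (h5 u uP) => // hnb; by move: snP; rewrite hnb.
have [ts ps] : task robot s /\ par robot W s = u.
  case: (wadj_cases hW hadj) => // [[tu pu]].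
  have ur : u != r by apply: contraTneq tu => ->; rewrite /task rr.
  by move: snP; rewrite -pu (inv_par_in hI uP ur).
have sr : s != r by apply: contraNneq snP => ->; rewrite EP inE eqxx.
split.
- split; first by exists (rcons P0 s); rewrite EP.
  by rewrite rcons_uniq snP U.
- move=> x; rewrite mem_rcons inE => /orP [/eqP -> _ | xP xr].
    rewrite ts /= ps index_rcons_in // -cats1 index_cat (negbTE snP) /= eqxx addn0.
    by rewrite index_mem.
  have /andP [-> hi] := h3 x xP xr.
  by rewrite !index_rcons_in // (inv_par_in hI xP xr).
- move=> x; rewrite mem_rcons inE => /orP [/eqP -> | xP]; last exact: h4.
  by rewrite -(root_par s hW) ps h4.
- move=> x; rewrite mem_rcons inE last_rcons => /orP [/eqP -> | xP].
    by left; apply: anc_refl.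
  case: (h5 x xP) => [hx | hnb]; last first.
    by right => y /hnb yP; rewrite mem_rcons inE yP orbT.
  case: (anc_chain hx ancu) => [hxu | [n En]].
    by left; apply: (anc_child ps hxu).
  have [xu | xu] := eqVneq u x.
    by left; apply: (anc_child ps); rewrite -xu; apply: anc_refl.
  have hlt : (index u P < index x P)%N.
    by rewrite -En; apply: (inv_index_anc rr hI) => //; rewrite En.
  have ox := after x xP hlt.
  right => y hy; rewrite mem_rcons inE; apply/orP; right.
  apply/negPn/negP => ynP.
  have : y \in outl W P x by rewrite mem_filter hy ynP mem_enum.
  by rewrite ox.
- rewrite last_rcons (D_task hW hm ts) ps /wsum big_rcons ts /=.
  move: h6; rewrite /wsum => h6.
  have -> : list_cost c (rcons P s) = list_cost c P + c (last r P) s.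
    by rewrite EP rcons_cons /list_cost pcf_rcons.
  have h1 := met_tri (last r P) u s hm.
  have h2 := anc_cost hW hm ancu.
  rewrite (met_sym _ _ hm) in h2.
  rewrite ps; lra.
Qed.

Lemma dinv_init (R : realType) (V : finType) (robot : pred V) (c : V -> V -> R) W r :
  metric c -> robot r -> dinv robot c W r [:: r].
Proof.
move=> hm rr; split.
- by split => //; exists [::].
- by move=> x; rewrite inE => /eqP ->; rewrite eqxx.
- by move=> x; rewrite inE => /eqP ->; apply: root_of_robot.
- by move=> x; rewrite inE => /eqP ->; left; apply: anc_refl.
- rewrite /= /wsum big_cons big_nil /task rr /= (D_robot _ hm rr) /list_cost /=.
  by rewrite !mulr0 addr0.
Qed.

Lemma dinv_iter (R : realType) (V : finType) (robot : pred V) (c : V -> V -> R) W r n :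
  auction_run robot c W -> metric c -> robot r ->
  dinv robot c W r (iter n (dfs_step robot W) [:: r]).
Proof.
move=> hW hm rr; elim: n => [|n IH] /=; first exact: dinv_init.
exact: dinv_step.
Qed.

Lemma dfs_grow (R : realType) (V : finType) (robot : pred V) (c : V -> V -> R) W r n :
  let P := iter n (dfs_step robot W) [:: r] in
  dfs_step robot W P = P \/ (n < size P)%N.
Proof.
elim: n => [|n IH] /=; first by right.
set P := iter n (dfs_step robot W) [:: r] in IH *.
case: IH => [E | hs]; first by left; rewrite !E.
case: (dfs_stepP robot W P) => [[E _] | [u [s [pre [post [_ _ _ ->]]]]]].
  by left; rewrite !E.
case: (dfs_stepP robot W (rcons P s)) => [[-> _] | _]; first by left.
by right; rewrite size_rcons.
Qed.

Lemma df_fixed (R : realType) (V : finType) (robot : pred V) (c : V -> V -> R) W r :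
  auction_run robot c W -> metric c -> robot r ->
  dfs_step robot W (assign_plan robot W r) = assign_plan robot W r.
Proof.
move=> hW hm rr; rewrite /assign_plan /dfshortcut.
case: (dfs_grow robot c W r #|V|) => // hs.
have [[_ U] _ _ _ _] := dinv_iter #|V| hW hm rr.
move: hs; rewrite -(card_uniqP U) ltnNge max_card //.
Qed.

Lemma df_closed (R : realType) (V : finType) (robot : pred V) (c : V -> V -> R) W r x y :
  auction_run robot c W -> metric c -> robot r ->
  x \in assign_plan robot W r -> wadj W x y -> y \in assign_plan robot W r.
Proof.
move=> hW hm rr; have E := df_fixed hW hm rr.
set P := assign_plan robot W r in E *.
case: (dfs_stepP robot W P) => [[_ ho] | [u [s [pre [post [_ _ _ E2]]]]]].
  move=> xP hxy; apply/negPn/negP => ynP.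
  have : y \in outl W P x by rewrite mem_filter hxy ynP mem_enum.
  by rewrite ho.
by move: (congr1 size E); rewrite E2 size_rcons => /esym/n_Sn.
Qed.

Lemma df_dinv (R : realType) (V : finType) (robot : pred V) (c : V -> V -> R) W r :
  auction_run robot c W -> metric c -> robot r ->
  dinv robot c W r (assign_plan robot W r).
Proof. by move=> hW hm rr; apply: dinv_iter. Qed.

Lemma df_mem (R : realType) (V : finType) (robot : pred V) (c : V -> V -> R) W r x :
  auction_run robot c W -> metric c -> robot r ->
  (x \in assign_plan robot W r) = (rootv robot W x == r).
Proof.
move=> hW hm rr; have [[[P0 EP] U] h3 h4 h5 h6] := df_dinv hW hm rr.
apply/idP/eqP; first exact: h4.
move=> Ex.
suff H : forall m, (m <= #|V|)%N -> iter (#|V| - m) (par robot W) x \in assign_plan robot W r.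
  by have := H #|V| (leqnn _); rewrite subnn.
elim=> [|m IH] hm'.
  by rewrite subn0; move: Ex; rewrite /rootv => ->; rewrite EP inE eqxx.
have IH' := IH (ltnW hm').
have Es : (#|V| - m = (#|V| - m.+1).+1)%N by lia.
move: IH'; rewrite Es iterS.
set y := iter (#|V| - m.+1) (par robot W) x.
case ry: (robot y); first by rewrite par_robot.
move=> hp; apply: (df_closed hW hm rr hp).
by apply/orP; left; apply: (ar_task_in hW); rewrite /task ry.
Qed.

Lemma df_is_plan (R : realType) (V : finType) (robot : pred V) (c : V -> V -> R) W :
  auction_run robot c W -> metric c -> is_plan robot (assign_plan robot W).
Proof.
move=> hW hm; split.
  move=> r rr; have [[[P0 EP] U] h3 _ _ _] := df_dinv hW hm rr.
  exists P0; split => //; apply/allP => x xP0.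
  have xP : x \in assign_plan robot W r by rewrite EP inE xP0 orbT.
  have xr : x != r.
    by apply: contraNneq (_ : r \notin P0) => [<- //|]; move: U; rewrite EP /= => /andP [].
  by have /andP [] := h3 x xP xr.
move=> v; rewrite -(card1 (rootv robot W v)); apply: eq_card => r /=.
rewrite inE; case rr: (robot r) => /=.
  by rewrite (df_mem _ hW hm rr) eq_sym.
rewrite inE; apply/esym/negbTE; apply: contraFneq rr => ->; apply: (root_robot v hW).
Qed.

Lemma df_cost (R : realType) (V : finType) (robot : pred V) (c : V -> V -> R) W :
  auction_run robot c W -> metric c ->
  plan_cost robot c (assign_plan robot W) <=
  2%:R * \sum_(t | task robot t) c (par robot W t) t.
Proof.
move=> hW hm.
rewrite (partition_big (rootv robot W) robot); last by move=> i _; apply: (root_robot i hW).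
rewrite /plan_cost mulr_sumr; apply: ler_sum => r rr.
have [[[P0 EP] U] _ _ _ h6] := df_dinv hW hm rr.
have hD := D_ge0 robot W (last r (assign_plan robot W r)) hm.
suff <- : wsum robot c W (assign_plan robot W r) =
   \sum_(i | task robot i && (rootv robot W i == r)) c (par robot W i) i by lra.
rewrite /wsum big_mkcond big_uniq // -big_mkcondr.
by apply: eq_bigl => x; rewrite (df_mem _ hW hm rr) andbC.
Qed.

Definition adjF (V : finType) (F : seq (V * V)) : rel V :=
  fun x y => ((x, y) \in F) || ((y, x) \in F).
Definition reach (V : finType) (robot : pred V) (F : seq (V * V)) (t : V) :=
  exists p, path (adjF F) t p /\ robot (last t p).

Lemma first_hit (T : Type) (e : rel T) (P : pred T) x p :
  ~~ P x -> path e x p -> P (last x p) ->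
  exists q y, [/\ path e x q, all (predC P) (x :: q), e (last x q) y & P y].
Proof.
elim: p x => [|y p IH] x /=; first by move=> /negbTE ->.
move=> nx /andP [exy hp] hl.
case Py: (P y).
  by exists [::], y; rewrite /= nx.
have [q [z [h1 h2 h3 h4]]] := IH y (negbT Py) hp hl.
by exists (y :: q), z; split => //=; rewrite ?exy ?nx //.
Qed.

Lemma last_rev_belast (T : Type) (a : T) q : last (last a q) (rev (belast a q)) = a.
Proof.
case: q => [//|b q] /=; rewrite rev_cons last_rcons //.
Qed.


Lemma path_rev_sym (T : Type) (e : rel T) a q :
  symmetric e -> path e a q -> path e (last a q) (rev (belast a q)).
Proof.
move=> hs hp; rewrite rev_path.
have E : (fun z => e^~ z) =2 e by move=> u v; rewrite /= hs.
by rewrite (eq_path E).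
Qed.

Lemma adjF_sym (V : finType) (F : seq (V * V)) : symmetric (adjF F).
Proof. by move=> x y; rewrite /adjF orbC. Qed.

Lemma sum_ge_mem (R : realType) (T : eqType) (F : seq T) (P : pred T) (g : T -> R) f0 :
  (forall f, 0 <= g f) -> f0 \in F -> P f0 -> g f0 <= \sum_(f <- F | P f) g f.
Proof.
move=> h0; elim: F => [//|f F IH]; rewrite inE big_cons => /orP [/eqP <- -> | fF Pf0].
  by rewrite lerDl sumr_ge0.
case: ifP => _; last exact: IH.
by rewrite (le_trans (IH fF Pf0)) // lerDr.
Qed.

Lemma ar_behead (R : realType) (V : finType) (robot : pred V) (c : V -> V -> R) s t1 W2 :
  auction_run robot c ((s, t1) :: W2) ->
  auction_run [pred v | robot v || (v == t1)] c W2.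
Proof.
move=> hW; have [hs ht _ _] := ar_split_facts (W1 := [::]) hW erefl.
case: hW => hsz H; split.
  have := cardD1 t1 [pred v | task robot v]; rewrite inE ht -hsz /= add1n => -[->].
  apply: eq_card => v; rewrite !inE /task negb_or andbC.
  by [].
move=> W1 s0 t W3 EW /=.
have := H ((s, t1) :: W1) s0 t W3; rewrite EW => /(_ erefl) /=.
case=> h1 h2 h3 h4; split.
- by move: h1; rewrite inE orbA.
- by move: h2 h3; rewrite /task inE negb_or => -> /=; rewrite inE negb_or => /andP [].
- by move: h3; rewrite inE negb_or => /andP [].
- move=> s' t' hs' ht' hn'; apply: h4.
  + by move: hs'; rewrite inE orbA.
  + by move: ht'; rewrite /task negb_or => /andP [].
  + by rewrite inE negb_or hn' andbT; move: ht'; rewrite /task negb_or => /andP [].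
Qed.

Lemma prim_opt (R : realType) (V : finType) (c : V -> V -> R) W :
  metric c -> forall (robot : pred V), auction_run robot c W ->
  forall F : seq (V * V), (forall t, task robot t -> reach robot F t) ->
  \sum_(p <- W) c p.1 p.2 <= \sum_(f <- F) c f.1 f.2.
Proof.
move=> hm; elim: W => [|[s t1] W2 IH] robot hW F hF.
  by rewrite big_nil sumr_ge0 // => f _; case: hm.
have [hs ht _ hmin] := ar_split_facts (W1 := [::]) hW erefl.
have [p [hp hl]] := hF t1 ht.
have [q [rho [hq hall hxr hrho]]] := first_hit ht hp hl.
set x := last t1 q in hxr.
have nx : ~~ robot x.
  by have := allP hall x (mem_last _ _).
pose isE (f : V * V) := (f == (x, rho)) || (f == (rho, x)).
pose F' := [seq f <- F | ~~ isE f].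
have hcost : \sum_(f <- F) c f.1 f.2 = \sum_(f <- F') c f.1 f.2 + \sum_(f <- F | isE f) c f.1 f.2.
  by rewrite big_filter [LHS](bigID isE) /= addrC.
have hge : c s t1 <= \sum_(f <- F | isE f) c f.1 f.2.
  have h1 : c s t1 <= c x rho.
    by rewrite (met_sym x rho hm); apply: hmin => //; rewrite ?hrho.
  apply: le_trans h1 _.
  have g0 : forall f : V * V, 0 <= c f.1 f.2 by move=> f; case: hm.
  case/orP: hxr => hin.
    by apply: (sum_ge_mem g0 hin); rewrite /isE eqxx.
  have := sum_ge_mem (P := isE) g0 hin.
  by rewrite /= (met_sym rho x hm); apply; rewrite /isE eqxx orbT.
have sub : {in predC robot &, subrel (adjF F) (adjF F')}.
  move=> a b na nb hab; rewrite /adjF !mem_filter /isE !xpair_eqE.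
  have ar : (a == rho) = false by apply: contraNF na => /eqP ->.
  have br : (b == rho) = false by apply: contraNF nb => /eqP ->.
  by rewrite ar br !andbF.
have hF' : forall t, task [pred v | robot v || (v == t1)] t -> reach [pred v | robot v || (v == t1)] F' t.
  move=> t; rewrite /task inE negb_or => /andP [tt tn].
  have [pt [hpt hlt]] := hF t tt.
  have [qt [rt [hqt hallt hyr hrt]]] := first_hit tt hpt hlt.
  set y := last t qt in hyr.
  have ny : ~~ robot y by have := allP hallt y (mem_last _ _).
  have hqt' : path (adjF F') t qt by apply: sub_in_path hallt hqt.
  case E: ((y == x) && (rt == rho)).
    move/andP: E => [/eqP Eyx _].
    exists (qt ++ rev (belast t1 q)); rewrite cat_path last_cat -/y Eyx /x.
    rewrite last_rev_belast hqt' /= eqxx orbT; split => //.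
    apply: path_rev_sym; first exact: adjF_sym.
    exact: sub_in_path hall hq.
  exists (rcons qt rt); rewrite rcons_path last_rcons hqt' /= hrt; split => //.
  rewrite -/y /adjF !mem_filter /isE !xpair_eqE.
  have yr : (y == rho) = false by apply: contraNF ny => /eqP ->.
  have rx : (rt == x) = false by apply: contraTF hrt => /eqP ->; exact: nx.
  rewrite yr rx /= andbC E /=.
  by rewrite andbT [(rt == rho) && _]andbC E /=; exact: hyr.
have := IH _ (ar_behead hW) F' hF'.
rewrite big_cons hcost /=; lra.
Qed.

Definition planF (V : finType) (robot : pred V) (Q : V -> seq V) : seq (V * V) :=
  flatten [seq zip (Q r) (behead (Q r)) | r <- enum robot].

Lemma pcf_zip (R : realType) (V : finType) (c : V -> V -> R) x s :
  path_cost_from c x s = \sum_(f <- zip (x :: s) s) c f.1 f.2.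
Proof.
elim: s x => [|y s IH] x /=; first by rewrite big_nil.
by rewrite big_cons IH.
Qed.

Lemma planF_cost (R : realType) (V : finType) (robot : pred V) (c : V -> V -> R) Q :
  \sum_(f <- planF robot Q) c f.1 f.2 = plan_cost robot c Q.
Proof.
rewrite /planF big_flatten /= big_map big_enum /plan_cost /=.
apply: eq_bigr => r _; case: (Q r) => [|x s] /=; first by rewrite big_nil.
by rewrite pcf_zip.
Qed.

Lemma zip_path (V : finType) (F : seq (V * V)) x s :
  {subset zip (x :: s) s <= F} -> path (adjF F) x s.
Proof.
elim: s x => [//|y s IH] x /= hsub; apply/andP; split.
  by rewrite /adjF hsub ?inE ?eqxx.
by apply: IH => f hf; apply: hsub; rewrite inE hf orbT.
Qed.

Lemma planF_reach (V : finType) (robot : pred V) Q :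
  is_plan robot Q -> forall t, task robot t -> reach robot (planF robot Q) t.
Proof.
case=> hroute hcard t tt.
have /card_gt0P [r] : (0 < #|[pred r | robot r && (t \in Q r)]|)%N by rewrite hcard.
rewrite inE => /andP [rr tQ].
have [s' [EQ _]] := hroute r rr.
have ts' : t \in s'.
  move: tQ; rewrite EQ inE => /orP [/eqP Etr|//].
  by move: tt; rewrite /task Etr rr.
have hp : path (adjF (planF robot Q)) r s'.
  apply: zip_path => f hf; apply/flatten_mapP; exists r; first by rewrite mem_enum.
  by rewrite EQ.
case/splitPr: ts' hp => s1 s2; rewrite -cat_rcons cat_path => /andP [hp1 _].
exists (rev (belast r (rcons s1 t))); split.
  by have := path_rev_sym (adjF_sym _) hp1; rewrite last_rcons.
by have := last_rev_belast r (rcons s1 t); rewrite last_rcons => ->.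
Qed.

Lemma costW_eq (R : realType) (V : finType) (robot : pred V) (c : V -> V -> R) W :
  auction_run robot c W ->
  \sum_(t | task robot t) c (par robot W t) t = \sum_(p <- W) c p.1 p.2.
Proof.
move=> hW.
rewrite (eq_big_seq (fun p => c (par robot W p.2) p.2)); last first.
  by move=> p pW; rewrite (ar_par hW pW).
rewrite -(big_map snd xpredT (fun t => c (par robot W t) t)).
rewrite big_uniq ?(ar_uniq hW) //; apply: eq_bigl => t.
by apply/idP/idP => [h|h]; [apply: (ar_task_snd hW) | apply: (ar_snd_task hW)].
Qed.

Unset Implicit Arguments. Set Strict Implicit.

Theorem corollary13 (R : realType) (V : finType) (robot : pred V)
    (c : V -> V -> R)
    (hRne : exists r, robot r) (hV : (3 <= #|V|)%N)
    (hmet : metric c) (hinj : injective_on_edges c)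
    (W : seq (V * V)) (hW : auction_run robot c W) :
  (is_plan robot (assign_plan robot W) /\
   forall P, is_minsum robot c P ->
     plan_cost robot c (assign_plan robot W) <= 2%:R * plan_cost robot c P) /\
  (forall c' : V -> V -> R,
     (forall x y, c' x y = c' y x) ->
     (forall x y, x != y ->
        ((c x y)%:E - dlow robot c W x y < (c' x y)%:E)%E /\
        ((c' x y)%:E <= (c x y)%:E + dup robot c W x y)%E) ->
     forall W', auction_run robot c' W' ->
       W' = W /\ assign_plan robot W' = assign_plan robot W).
Proof.
split.
  split; first exact: (df_is_plan hW hmet).
  move=> P [hP _].
  apply: (le_trans (df_cost hW hmet)).
  rewrite (costW_eq hW) -(planF_cost robot c P).
  rewrite ler_pM2l ?ltr0n //.
  exact: (prim_opt hmet hW (planF_reach hP)).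
move=> c' _ hc W' hW'.
have E := robust_eq hW hc hW'.
by split => //; rewrite E.
Qed.
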